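(* For a commutative ring $R$ the following are equivalent: (i) $R$ is a quasi p.f. ring; (ii) $R_{\mathfrak p}$ is a primary ring for all $\mathfrak p\in\operatorname{Spec}(R)$; (iii) $R_{\mathfrak m}$ is a primary ring for all maximal ideals $\mathfrak m$ of $R$; (iv) $\ker(R\to R_{\mathfrak p})$ is a pure ideal for every minimal prime ideal $\mathfrak p$ of $R$; (v) $\ker(R\to R_{\mathfrak m})$ is a primary ideal for every maximal ideal $\mathfrak m$ of $R$.
   Context: An ideal $I$ is quasi-pure if for each $f\in I$ there is $g\in I$ with $f(1-g)$ nilpotent. $R$ is a quasi p.f. ring if $\operatorname{Ann}(f)$ is quasi-pure for every $f\in R$. An ideal $I$ is pure if for each $f\in I$ there is $g\in I$ with $f(1-g)=0$. A ring is primary if its zero ideal is primary (every zero-divisor is nilpotent). *)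

(* Defs.v *)
From mathcomp Require Import all_boot all_algebra.
Set Implicit Arguments. Unset Strict Implicit. Unset Printing Implicit Defensive.
Import GRing.Theory.
Local Open Scope ring_scope.

Section Ideals.
Variable R : comPzRingType.
Implicit Types (I J p m q : R -> Prop) (a b f g x y : R).

Definition is_ideal I : Prop :=
  I 0 /\ (forall x y, I x -> I y -> I (x + y)) /\ (forall a x, I x -> I (a * x)).

Definition proper_ideal I : Prop := is_ideal I /\ ~ I 1.

Definition prime_ideal p : Prop :=
  proper_ideal p /\ (forall a b, p (a * b) -> p a \/ p b).

Definition maximal_ideal m : Prop :=
  proper_ideal m /\
  (forall J, is_ideal J -> (forall x, m x -> J x) -> (forall x, J x -> m x) \/ J 1).

Definition minimal_prime p : Prop :=
  prime_ideal p /\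
  (forall q, prime_ideal q -> (forall x, q x -> p x) -> forall x, p x -> q x).

Definition nilpotent x : Prop := exists n : nat, x ^+ n = 0.

Definition Ann f : R -> Prop := fun x => x * f = 0.

Definition quasi_pure I : Prop :=
  forall f, I f -> exists g, I g /\ nilpotent (f * (1 - g)).

Definition pure_ideal I : Prop :=
  forall f, I f -> exists g, I g /\ f * (1 - g) = 0.

Definition primary_ideal I : Prop :=
  proper_ideal I /\ (forall x y, I (x * y) -> ~ I x -> exists n : nat, I (y ^+ n)).

Definition quasi_pf_ring : Prop := forall f, quasi_pure (Ann f).

(* Elements of R_p are fractions a/s, represented by pairs (a, s) with ~ p s;
   equality of fractions a/s = b/t iff exists u notin p, u(at - bs) = 0. *)
Definition frac p (x : R * R) : Prop := ~ p x.2.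

Definition loc_eq p (x y : R * R) : Prop :=
  exists u, ~ p u /\ u * (x.1 * y.2 - y.1 * x.2) = 0.

Definition loc_mul (x y : R * R) : R * R := (x.1 * y.1, x.2 * y.2).
Definition loc_pow (x : R * R) (n : nat) : R * R := (x.1 ^+ n, x.2 ^+ n).
Definition loc_zero : R * R := (0, 1).
Definition loc_one : R * R := (1, 1).

(* R_p is a primary ring: its zero ideal is primary, i.e. R_p is nonzero and
   every zero-divisor of R_p is nilpotent. *)
Definition localization_primary p : Prop :=
  ~ loc_eq p loc_one loc_zero /\
  forall x y : R * R, frac p x -> frac p y ->
    loc_eq p (loc_mul x y) loc_zero -> ~ loc_eq p y loc_zero ->
    exists n : nat, loc_eq p (loc_pow x n) loc_zero.

Definition loc_ker p : R -> Prop := fun a => loc_eq p (a, 1) loc_zero.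

End Ideals.

(* Main.v *)
Require Import Defs.
From mathcomp Require Import all_boot all_algebra.
From mathcomp Require Import ring zify.
From mathcomp Require Import boolp classical_sets.
From Stdlib Require Import Classical_Prop.
Import GRing.Theory.
Set Implicit Arguments. Unset Strict Implicit. Unset Printing Implicit Defensive.
Local Open Scope ring_scope.

Definition K (R : comPzRingType) (p : R -> Prop) (a : R) :=
  exists u, ~ p u /\ u * a = 0.

Lemma loc_eq0 (R : comPzRingType) (p : R -> Prop) (x : R * R) :
  loc_eq p x (loc_zero R) <-> K p x.1.
Proof.
by rewrite /loc_eq /K /= mulr1 mul0r subr0.
Qed.

Lemma loc_kerE (R : comPzRingType) (p : R -> Prop) (a : R) :
  loc_ker p a <-> K p a.
Proof. exact: (loc_eq0 p (a, 1)). Qed.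

Lemma prime_mulN (R : comPzRingType) (p : R -> Prop) a b :
  prime_ideal p -> ~ p a -> ~ p b -> ~ p (a * b).
Proof. by move=> [_ Hp] na nb /Hp [] . Qed.

Lemma prime_expN (R : comPzRingType) (p : R -> Prop) a n :
  prime_ideal p -> ~ p a -> ~ p (a ^+ n).
Proof.
move=> pp na; elim: n => [|n IH]; first by rewrite expr0; case: pp => [[_ ?] _].
by rewrite exprS; apply: prime_mulN.
Qed.

Lemma prime_1g (R : comPzRingType) (p : R -> Prop) g :
  prime_ideal p -> p g -> ~ p (1 - g).
Proof.
move=> [[[_ [Hadd _]] n1] _] pg p1g; apply: n1.
by have := Hadd _ _ pg p1g; rewrite addrC subrK.
Qed.

Lemma K_sub_p (R : comPzRingType) (p : R -> Prop) a :
  prime_ideal p -> K p a -> p a.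
Proof.
move=> [[[p0 _] _] Hp] [u [nu ua]].
by have [//|//] := Hp u a (ltac:(rewrite ua; exact p0)).
Qed.

Lemma K_ideal (R : comPzRingType) (p : R -> Prop) :
  prime_ideal p -> is_ideal (K p).
Proof.
move=> pp; split; last split.
- exists 1; split; first by case: pp => [[_ ?] _]. by rewrite mulr0.
- move=> x y [u [nu ux]] [v [nv vy]]; exists (u * v); split; first exact: prime_mulN.
  have -> : u * v * (x + y) = v * (u * x) + u * (v * y) by ring.
  by rewrite ux vy !mulr0 addr0.
- move=> a x [u [nu ux]]; exists u; split => //.
  by rewrite mulrCA ux mulr0.
Qed.

Lemma max_prime (R : comPzRingType) (m : R -> Prop) :
  maximal_ideal m -> prime_ideal m.
Proof.
move=> mm; have [[[m0 [madd mmul]] m1] Hm] := mm; split; first exact: mm.1.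
move=> a b mab; case: (pselect (m a)) => ma; [by left|right].
pose J z := exists x r, m x /\ z = x + r * a.
have Ji : is_ideal J.
  split; last split.
  + by exists 0, 0; rewrite mul0r addr0.
  + move=> x y [x1 [r1 [h1 ->]]] [x2 [r2 [h2 ->]]]; exists (x1 + x2), (r1 + r2).
    split; first exact: madd. by rewrite mulrDl; ring.
  + move=> c x [x1 [r1 [h1 ->]]]; exists (c * x1), (c * r1); split; first exact: mmul.
    by ring.
case: (Hm J Ji).
- by move=> x mx; exists x, 0; rewrite mul0r addr0.
- by move=> sub; exfalso; apply: ma; apply: sub; exists 0, 1; rewrite mul1r add0r.
- move=> [x [r [mx e]]].
  have -> : b = b * x + r * (a * b).
    have -> : b * x + r * (a * b) = b * (x + r * a) by ring.
    by rewrite -e mulr1.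
  by apply: madd; apply: mmul.
Qed.

Lemma nil_add (R : comPzRingType) (s t a b : R) n k :
  s * a ^+ n = 0 -> t * b ^+ k = 0 -> s * t * (a + b) ^+ (n + k) = 0.
Proof.
move=> ha hb; rewrite exprDn mulr_sumr big1 // => i _.
rewrite mulrnAr; suff -> : s * t * (a ^+ (n + k - i) * b ^+ i) = 0 by rewrite mul0rn.
case: (ltnP i k) => hi.
- have -> : (n + k - i = n + (k - i))%N by lia.
  rewrite exprD.
  have -> : s * t * (a ^+ n * a ^+ (k - i) * b ^+ i) = (s * a ^+ n) * (t * a ^+ (k - i) * b ^+ i) by ring.
  by rewrite ha mul0r.
- have -> : i = (k + (i - k))%N :> nat by lia.
  rewrite exprD.
  have -> : s * t * (a ^+ (n + k - (k + (i - k))) * (b ^+ k * b ^+ (i - k))) = (t * b ^+ k) * (s * a ^+ (n + k - (k + (i - k))) * b ^+ (i - k)) by ring.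
  by rewrite hb mul0r.
Qed.

Lemma nilD (R : comPzRingType) (a b : R) :
  nilpotent a -> nilpotent b -> nilpotent (a + b).
Proof.
move=> [n ha] [k hb]; exists (n + k)%N.
have := @nil_add R 1 1 a b n k; rewrite !mul1r; apply => //.
Qed.

Lemma nilM (R : comPzRingType) (a b : R) : nilpotent b -> nilpotent (a * b).
Proof. by move=> [n hb]; exists n; rewrite exprMn hb mulr0. Qed.

Lemma zorn_pred (T : Type) (P : (T -> Prop) -> Prop) (X0 : T -> Prop) :
  P X0 ->
  (forall C : (T -> Prop) -> Prop, (forall X, C X -> P X) ->
     (forall X Y, C X -> C Y -> (forall t, X t -> Y t) \/ (forall t, Y t -> X t)) ->
     forall X1, C X1 -> P (fun t => exists X, C X /\ X t)) ->
  exists Y, P Y /\ forall Z, P Z -> (forall t, Y t -> Z t) -> forall t, Z t -> Y t.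
Proof.
move=> P0 Hch.
pose S := {X : T -> Prop | P X}.
pose Rl : rel S := fun s t => `[< forall x, proj1_sig s x -> proj1_sig t x >].
have [t tmax] : exists t, premaximal (fun x y => Rl x y) t.
  apply: (@ZL_preorder S (exist _ X0 P0) Rl).
- by move=> s; apply/asboolP.
- by move=> r s u /asboolP h1 /asboolP h2; apply/asboolP => x /h1 /h2.
- move=> A Atot; case: (pselect (exists s, A s)) => [[s0 As0]|nA].
  + have PU : P (fun t => exists X, (exists s, A s /\ proj1_sig s = X) /\ X t).
      apply: (Hch _ _ _ (proj1_sig s0)).
      * by move=> X [s [_ <-]]; exact: proj2_sig.
      * move=> X Y [s [As <-]] [s' [As' <-]].
        by case: (Atot s s' As As') => /asboolP h; [left|right].
      * by exists s0.
    exists (exist _ _ PU) => s As; apply/asboolP => x sx /=.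
    by exists (proj1_sig s); split => //; exists s.
  + by exists (exist _ X0 P0) => s As; exfalso; apply: nA; exists s.
- exists (proj1_sig t); split; first exact: proj2_sig t.
  move=> Z PZ tZ.
  by move: (tmax (exist _ Z PZ) (asboolT tZ)) => /asboolP.
Qed.

Lemma exists_max (R : comPzRingType) (I : R -> Prop) :
  is_ideal I -> ~ I 1 -> exists m, maximal_ideal m /\ forall x, I x -> m x.
Proof.
move=> Ii nI1.
pose P (J : R -> Prop) := is_ideal J /\ ~ J 1 /\ (forall x, I x -> J x).
have [Y [[Yi [nY1 IY]] Ymax]] : exists Y, P Y /\ forall Z, P Z -> (forall t, Y t -> Z t) -> forall t, Z t -> Y t.
  apply: (zorn_pred (X0 := I)); first by split.
  move=> C CP Ctot X1 CX1; split; last split.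
  - split; last split.
    + by exists X1; split => //; case: (CP _ CX1) => [[? _] _].
    + move=> x y [X [CX Xx]] [Y [CY Yy]].
      case: (Ctot _ _ CX CY) => sub.
      * exists Y; split => //; case: (CP _ CY) => [[_ [Hadd _]] _]; exact: Hadd (sub _ Xx) Yy.
      * exists X; split => //; case: (CP _ CX) => [[_ [Hadd _]] _]; exact: Hadd Xx (sub _ Yy).
    + move=> a x [X [CX Xx]]; exists X; split => //.
      by case: (CP _ CX) => [[_ [_ Hmul]] _]; exact: Hmul.
  - by move=> [X [CX X1']]; case: (CP _ CX) => [_ [nX1 _]]; exact: nX1.
  - by move=> x Ix; exists X1; split => //; case: (CP _ CX1) => [_ [_ h]]; exact: h.
exists Y; split => //; split; first by split.
move=> J Ji YJ; case: (pselect (J 1)) => [J1|nJ1]; [by right|left].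
apply: Ymax => //; split => //; split => // x /IY; exact: YJ.
Qed.

Lemma exists_minprime (R : comPzRingType) (m : R -> Prop) :
  prime_ideal m -> exists p, prime_ideal p /\ (forall x, p x -> m x) /\
    (forall s, p s -> exists t n, ~ p t /\ t * s ^+ n = 0).
Proof.
move=> pm; have [[[m0 [madd mmul]] m1] mpr] := pm.
pose P (S : R -> Prop) := (forall x, ~ m x -> S x) /\
   (forall a b, S a -> S b -> S (a * b)) /\ ~ S 0.
have [S [[mS [Smul nS0]] Smax]] : exists Y, P Y /\ forall Z, P Z -> (forall t, Y t -> Z t) -> forall t, Z t -> Y t.
  apply: (zorn_pred (X0 := fun x => ~ m x)).
    split => //; split => //; by move=> a b; apply: prime_mulN.
  move=> C CP Ctot X1 CX1; split; last split.
  - by move=> x nmx; exists X1; split => //; case: (CP _ CX1) => [h _]; exact: h.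
  - move=> x y [X [CX Xx]] [Y [CY Yy]].
    case: (Ctot _ _ CX CY) => sub.
    + exists Y; split => //; case: (CP _ CY) => [_ [Hm _]]; exact: Hm (sub _ Xx) Yy.
    + exists X; split => //; case: (CP _ CX) => [_ [Hm _]]; exact: Hm Xx (sub _ Yy).
  - by move=> [X [CX X0']]; case: (CP _ CX) => [_ [_ h]]; exact: h.
have S1 : S 1 by apply: mS.
have Sexp : forall z n, S z -> S (z ^+ n).
  move=> z n Sz; elim: n => [|n IH]; first by rewrite expr0.
  by rewrite exprS; apply: Smul.
have key : forall a, ~ S a -> exists s n, S s /\ s * a ^+ n = 0.
  move=> a nSa; apply: NNPP => hn.
  pose S' z := exists s n, S s /\ z = s * a ^+ n.
  have SS' : forall x, S x -> S' x by move=> x Sx; exists x, 0%N; rewrite expr0 mulr1.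
  have PS' : P S'.
    split; last split.
    - by move=> x /mS /SS'.
    - move=> x y [s [n [Ss ->]]] [t [k [St ->]]]; exists (s * t), (n + k)%N.
      split; first exact: Smul. by rewrite exprD; ring.
    - move=> [s [n [Ss e]]]; apply: hn; by exists s, n.
  apply: nSa; apply: (Smax S' PS' SS'); exists 1, 1%N; split => //.
  by rewrite expr1 mul1r.
exists (fun x => ~ S x); split; last split.
- split; last first.
    move=> a b nSab; case: (pselect (S a)) => Sa; last by left.
    case: (pselect (S b)) => Sb; last by right.
    by exfalso; apply: nSab; apply: Smul.
  split; last by move=> /(_ S1).
  split => //; split.
  + move=> x y /key [s [n [Ss hs]]] /key [t [k [St ht]]] Sxy.
    apply: nS0; rewrite -(nil_add hs ht).
    exact: (Smul _ _ (Smul _ _ Ss St) (Sexp _ _ Sxy)).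
  + move=> a x /key [s [n [Ss hs]]] Sax; apply: nS0.
    have <- : s * (a * x) ^+ n = 0.
      by rewrite exprMn mulrCA hs mulr0.
    by apply: Smul => //; apply: Sexp.
- move=> x nSx; apply: NNPP => nmx; exact: nSx (mS _ nmx).
- move=> s /key [t [n [St ht]]]; exists t, n; split => //.
Qed.

Lemma minprime_of (R : comPzRingType) (p : R -> Prop) :
  prime_ideal p -> (forall s, p s -> exists t n, ~ p t /\ t * s ^+ n = 0) ->
  minimal_prime p.
Proof.
move=> pp Hp; split => // q pq qp x px.
have [t [n [npt ht]]] := Hp x px.
have nqt : ~ q t by move=> /qp.
have qtx : q (t * x ^+ n) by rewrite ht; case: pq => [[[q0 _] _] _].
case: pq => [pq' qpr]; case: (qpr _ _ qtx) => // qxn.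
apply: NNPP => nqx; exact: (@prime_expN R q x n (conj pq' qpr) nqx) qxn.
Qed.

Definition Hm (R : comPzRingType) := forall m : R -> Prop, maximal_ideal m ->
  forall a b, K m (a * b) -> ~ K m b -> exists n : nat, K m (a ^+ n).

Lemma step_i_ii (R : comPzRingType) :
  quasi_pf_ring R -> forall p : R -> Prop, prime_ideal p -> localization_primary p.
Proof.
move=> qpf p pp; split.
  move/loc_eq0 => [u [nu /=]]; rewrite mulr1 => u0; apply: nu; rewrite u0.
  by case: pp => [[[? _] _] _].
move=> x y _ _ /loc_eq0 /= [u [nu hu]] nKy.
have Ann1 : Ann y.1 (u * x.1) by rewrite /Ann -mulrA.
have [g [gy [n hn]]] := qpf _ _ Ann1.
have pg : p g.
  apply: NNPP => npg; apply: nKy; apply/loc_eq0; exists g; split => //.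
exists n; apply/loc_eq0 => /=; exists ((u * (1 - g)) ^+ n); split.
  by apply: prime_expN => //; apply: prime_mulN => //; apply: prime_1g.
rewrite -exprMn -hn; congr (_ ^+ _); ring.
Qed.

Lemma step_ii_iii (R : comPzRingType) :
  (forall p : R -> Prop, prime_ideal p -> localization_primary p) ->
  (forall m : R -> Prop, maximal_ideal m -> localization_primary m).
Proof. by move=> H m /max_prime /H. Qed.

Lemma step_iii_Hm (R : comPzRingType) :
  (forall m : R -> Prop, maximal_ideal m -> localization_primary m) -> Hm R.
Proof.
move=> H m mm a b Kab nKb.
have pm := max_prime mm.
have n1 : ~ m 1 by case: pm => [[_ ?] _].
have [_ Hl] := H m mm.
have [||n hn] := Hl (a, 1) (b, 1) n1 n1.
- by apply/loc_eq0.
- by move/loc_eq0.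
by exists n; move/loc_eq0: hn.
Qed.

Lemma step_v_Hm (R : comPzRingType) :
  (forall m : R -> Prop, maximal_ideal m -> primary_ideal (loc_ker m)) -> Hm R.
Proof.
move=> H m mm a b Kab nKb.
have [_ Hl] := H m mm.
have [||n hn] := Hl b a.
- by apply/loc_kerE; rewrite mulrC.
- by move/loc_kerE.
by exists n; move/loc_kerE: hn.
Qed.

Lemma step_Hm_i (R : comPzRingType) : Hm R -> quasi_pf_ring R.
Proof.
move=> H f x; rewrite /Ann => xf.
pose J z := exists g y, g * f = 0 /\ nilpotent (x * y) /\ z = g + y.
case: (pselect (J 1)) => [[g [y [gf [ny e]]]]|nJ1].
  exists g; split => //.
  by have -> : 1 - g = y by rewrite e; ring.
have Ji : is_ideal J.
  split; last split.
  - by exists 0, 0; rewrite mul0r addr0; split => //; split => //; exists 1%N; rewrite expr1 mulr0.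
  - move=> z1 z2 [g1 [y1 [h1 [n1 ->]]]] [g2 [y2 [h2 [n2 ->]]]].
    exists (g1 + g2), (y1 + y2); split; first by rewrite mulrDl h1 h2 addr0.
    split; first by rewrite mulrDr; apply: nilD.
    by ring.
  - move=> c z [g [y [h [n ->]]]]; exists (c * g), (c * y); split.
      by rewrite -mulrA h mulr0.
    split; last by ring.
    by rewrite mulrCA; apply: nilM.
have [m [mm Jm]] := exists_max Ji nJ1.
have pm := max_prime mm.
have n1 : ~ m 1 by case: pm => [[_ ?] _].
have [||n [v [nv hv]]] := H m mm x f.
- by exists 1; split => //; rewrite mul1r.
- move=> [u [nu uf]]; apply: nu; apply: Jm; exists u, 0; split => //.
  split; last by rewrite addr0.
  by exists 1%N; rewrite mulr0 expr1.
exfalso; apply: nv; apply: Jm; exists 0, v; split; first by rewrite mul0r.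
split; last by rewrite add0r.
exists n.+1.
have -> : (x * v) ^+ n.+1 = (v * x ^+ n) * (x * v ^+ n) by rewrite exprMn !exprS; ring.
by rewrite hv mul0r.
Qed.

Lemma step_Hm_iv (R : comPzRingType) : Hm R ->
  forall p : R -> Prop, minimal_prime p -> pure_ideal (loc_ker p).
Proof.
move=> H p [pp _] a /loc_kerE [u [nu ua]].
have n1p : ~ p 1 by case: pp => [[_ ?] _].
have Kpi := K_ideal pp.
pose J z := exists h k, h * a = 0 /\ K p k /\ z = h + k.
case: (pselect (J 1)) => [[h [k [ha [Kk e]]]]|nJ1].
  exists k; split; first by apply/loc_kerE.
  have -> : 1 - k = h by rewrite e; ring.
  by rewrite mulrC.
have Ji : is_ideal J.
  split; last split.
  - exists 0, 0; rewrite mul0r addr0; split => //; split => //.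
    by case: Kpi.
  - move=> z1 z2 [h1 [k1 [e1 [K1 ->]]]] [h2 [k2 [e2 [K2 ->]]]].
    exists (h1 + h2), (k1 + k2); split; first by rewrite mulrDl e1 e2 addr0.
    split; first by case: Kpi => [_ [Hadd _]]; apply: Hadd.
    by ring.
  - move=> c z [h [k [e1 [K1 ->]]]]; exists (c * h), (c * k); split.
      by rewrite -mulrA e1 mulr0.
    split; last by ring.
    by case: Kpi => [_ [_ Hmul]]; apply: Hmul.
have [m [mm Jm]] := exists_max Ji nJ1.
have pm := max_prime mm.
have n1 : ~ m 1 by case: pm => [[_ ?] _].
have [||n [v [nv hv]]] := H m mm u a.
- by exists 1; split => //; rewrite mul1r.
- move=> [w [nw wa]]; apply: nw; apply: Jm; exists w, 0; split => //.
  split; last by rewrite addr0.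
  by case: Kpi.
exfalso; apply: nv; apply: Jm; exists 0, v; split; first by rewrite mul0r.
split; last by rewrite add0r.
exists (u ^+ n); split; first by apply: prime_expN.
by rewrite mulrC.
Qed.

Lemma step_iv_v (R : comPzRingType) :
  (forall p : R -> Prop, minimal_prime p -> pure_ideal (loc_ker p)) ->
  (forall m : R -> Prop, maximal_ideal m -> primary_ideal (loc_ker m)).
Proof.
move=> H m mm.
have pm := max_prime mm.
have [p [pp [pm_sub Hp]]] := exists_minprime pm.
have Hpure := H p (minprime_of pp Hp).
have -> : loc_ker m = K m by apply: funext => a; apply: propext; exact: loc_kerE.
have Kpm : forall a, K p a -> K m a.
  move=> a Ka; have [g [/loc_kerE Kg ag]] := Hpure a (proj2 (loc_kerE _ _) Ka).
  exists (1 - g); split; first by apply: prime_1g => //; apply: pm_sub; apply: K_sub_p.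
  by rewrite mulrC.
have Kmp : forall a, K m a -> K p a.
  by move=> a [u [nu ua]]; exists u; split => // /pm_sub.
split.
  split; first exact: K_ideal.
  move=> [u [nu]]; rewrite mulr1 => u0; apply: nu; rewrite u0.
  by case: pm => [[[? _] _] _].
move=> x y /Kmp [v [nv hv]] nKx.
case: (pselect (p y)) => py.
  have [t [n [nt ht]]] := Hp y py.
  by exists n; apply: Kpm; exists t.
exfalso; apply: nKx; apply: Kpm; exists (v * y); split; first exact: prime_mulN.
by rewrite -mulrA (mulrC y) hv.
Qed.

Theorem theorem4p1 (R : comPzRingType) :
  [<-> quasi_pf_ring R;
       forall p : R -> Prop, prime_ideal p -> localization_primary p;
       forall m : R -> Prop, maximal_ideal m -> localization_primary m;
       forall p : R -> Prop, minimal_prime p -> pure_ideal (loc_ker p);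
       forall m : R -> Prop, maximal_ideal m -> primary_ideal (loc_ker m)].
Proof.
tfae.
- exact: step_i_ii.
- exact: step_ii_iii.
- by move=> H; apply: step_Hm_iv; apply: step_iii_Hm.
- exact: step_iv_v.
- by move=> H; apply: step_Hm_i; apply: step_v_Hm.
Qed.
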